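(* Let $S$ be an expanding automaton semigroup over an alphabet $\Sigma$ (i.e. $S=S(\mathcal{A})$ for an expanding automaton $\mathcal{A}$ over $\Sigma$), and let $P_\Sigma$ be the set of primes dividing $|\Sigma|!$. If $s\in S$ satisfies $s^m=s^n$ for some $m<n$ with $s,s^2,\dots,s^{n-1}$ pairwise distinct, then every prime divisor of $n-m$ lies in $P_\Sigma$.
   Context: An expanding automaton is a quadruple $\mathcal{A}=(Q,\Sigma,t,o)$ with $Q$ a finite set of states, $\Sigma$ a finite alphabet, $t:Q\times\Sigma\to Q$ and $o:Q\times\Sigma\to\Sigma^+$. Each state $q$ induces $q:\Sigma^*\to\Sigma^*$ by $q(\emptyset)=\emptyset$ and $q(\sigma w)=o(q,\sigma)\,q'(w)$ with $q'=t(q,\sigma)$. $S(\mathcal{A})$ is the semigroup of maps $\Sigma^*\to\Sigma^*$ generated under composition by the states. *)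

(* Defs.v *)
From mathcomp Require Import all_boot.
Set Implicit Arguments. Unset Strict Implicit. Unset Printing Implicit Defensive.

Record expanding_automaton (Q Sigma : finType) := ExpAut {
  ea_t : Q -> Sigma -> Q;
  ea_o : Q -> Sigma -> seq Sigma;
  ea_o_nonempty : forall q a, ea_o q a != [::]
}.

Fixpoint state_map (Q Sigma : finType) (A : expanding_automaton Q Sigma)
    (q : Q) (w : seq Sigma) : seq Sigma :=
  match w with
  | [::] => [::]
  | a :: w' => ea_o A q a ++ state_map A (ea_t A q a) w'
  end.

Definition word_map (Q Sigma : finType) (A : expanding_automaton Q Sigma)
    (qs : seq Q) : seq Sigma -> seq Sigma :=
  foldr (fun q f => state_map A q \o f) id qs.

Definition in_S (Q Sigma : finType) (A : expanding_automaton Q Sigma)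
    (f : seq Sigma -> seq Sigma) : Prop :=
  exists qs : seq Q, qs != [::] /\ f =1 word_map A qs.

(* Main.v *)
Require Import Defs.
From mathcomp Require Import all_boot.

Section Aux.
Variables (Q Sigma : finType) (A : expanding_automaton Q Sigma).

Lemma size_state_map q w : size w <= size (state_map A q w).
Proof.
elim: w q => [|a w IH] q //=.
rewrite size_cat; have := ea_o_nonempty A q a.
case: (ea_o A q a) => // b l _ /=.
rewrite addSn ltnS; apply: leq_trans (IH (ea_t A q a)) _; exact: leq_addl.
Qed.

Lemma size_word_map qs w : size w <= size (word_map A qs w).
Proof.
elim: qs => [|q qs IH] //=.
exact: leq_trans IH (size_state_map _ _).
Qed.

Definition delta q x := foldl (ea_t A) q x.

Lemma state_map_cat q x y :
  state_map A q (x ++ y) = state_map A q x ++ state_map A (delta q x) y.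
Proof. by elim: x q => [|a x IH] q //=; rewrite IH catA. Qed.

Fixpoint sect (qs : seq Q) (a : Sigma) : seq Q :=
  match qs with
  | [::] => [::]
  | q :: qs' => delta q (word_map A qs' [:: a]) :: sect qs' a
  end.

Lemma word_map_cons qs a x :
  word_map A qs (a :: x) = word_map A qs [:: a] ++ word_map A (sect qs a) x.
Proof.
elim: qs => [|q qs IH] //=.
by rewrite /= in IH; rewrite IH state_map_cat.
Qed.

Lemma word_map_cat qs1 qs2 x :
  word_map A (qs1 ++ qs2) x = word_map A qs1 (word_map A qs2 x).
Proof. by rewrite /word_map foldr_cat; elim: qs1 => //= q qs <-. Qed.

Lemma iter_word_map k qs x :
  iter k (word_map A qs) x = word_map A (flatten (nseq k qs)) x.
Proof. by elim: k => //= k ->; rewrite word_map_cat. Qed.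

Lemma word_map_nil qs : word_map A qs [::] = [::].
Proof. by elim: qs => //= q qs ->. Qed.

Lemma iter_period (T : Type) (f : T -> T) d u k :
  iter d f u = u -> iter (d * k) f u = u.
Proof.
move=> H; elim: k => [|k IH]; first by rewrite muln0.
by rewrite mulnS iterD IH H.
Qed.
Arguments iter_period {T f d u} k _.

Lemma size_iter qs k u : size u <= size (iter k (word_map A qs) u).
Proof. elim: k => //= k IH; exact: leq_trans IH (size_word_map _ _). Qed.

Lemma size_cycle qs d u k : 0 < d -> iter d (word_map A qs) u = u ->
  size (iter k (word_map A qs) u) = size u.
Proof.
move=> d0 H; apply/eqP; rewrite eqn_leq size_iter andbT.
have : size (iter (d * k - k + k) (word_map A qs) (iter 0 (word_map A qs) u)) <= size u.
  rewrite subnK ?leq_pmull //= iter_period //.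
rewrite iterD; apply: leq_trans; exact: size_iter.
Qed.

Lemma small_period (f : Sigma -> Sigma) d x : 0 < d -> iter d f x = x ->
  exists2 c, 0 < c <= #|Sigma| & iter c f x = x.
Proof.
move=> d0 H; exists (order f x).
  by rewrite order_gt0 /order max_card.
apply/(orbitPcycle 4 3); exists d.-1; by rewrite prednK.
Qed.

Let N := #|Sigma|`!.

Lemma core l : forall qs u, size u = l ->
  (exists2 d, 0 < d & iter d (word_map A qs) u = u) ->
  iter (N ^ l) (word_map A qs) u = u.
Proof.
elim: l => [|l IH] qs u.
  move/size0nil => -> _; elim: (N ^ 0) => //= k ->; exact: word_map_nil.
case: u => // a w [sw] [d d0 Hd].
set F := word_map A qs.
pose phi b := head b (F [:: b]).
have hF : forall b y, head b (F (b :: y)) = phi b /\ F (b :: y) != [::].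
  move=> b y; rewrite /phi /F word_map_cons.
  have := size_word_map qs [:: b].
  by case: (word_map A qs [:: b]).
have hd : forall k, head a (iter k F (a :: w)) = iter k phi a.
  elim=> //= k IHk.
  have : 0 < size (iter k F (a :: w)) by rewrite (@size_cycle qs d (a :: w) k d0 Hd).
  case E: (iter k F (a :: w)) => [|b y] // _.
  rewrite E /= in IHk; rewrite -IHk.
  case: (hF b y) => h1 h2; move: h2 h1.
  by case: (F (b :: y)).
have phid : iter d phi a = a by rewrite -hd Hd.
case: (@small_period phi d a d0 phid) => c /andP [c0 cS] phic.
pose R := flatten (nseq c qs).
pose G := word_map A (sect R a).
have FcR : forall x, iter c F x = word_map A R x by move=> x; rewrite iter_word_map.
have Ra : word_map A R [:: a] = [:: a].
  have sz := @size_cycle qs d (a :: w) c d0 Hd.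
  have h := hd c; rewrite phic FcR word_map_cons in h sz.
  rewrite size_cat /= in sz.
  have s2 := size_word_map (sect R a) w.
  have s1 := size_word_map R [:: a].
  move: h sz s2 s1; case: (word_map A R [:: a]) => [|b [|b' y]] //=.
  - by move=> -> .
  - move=> _ sz h _; exfalso; move: sz; rewrite !addSn => -[] /eqP.
    by rewrite eqn_leq leqNgt ltnS (leq_trans h (leq_addl _ _)).
have iterR : forall K x, iter K (word_map A R) (a :: x) = a :: iter K G x.
  by elim=> //= K IHK x; rewrite IHK word_map_cons Ra.
have Gd : iter d G w = w.
  have := iter_period c Hd; rewrite iterM.
  rewrite (eq_iter FcR) iterR; by case.
have IHw := IH (sect R a) w sw (ex_intro2 _ _ d d0 Gd : exists2 d, 0 < d & iter d G w = w).
have key : iter (N ^ l * c) F (a :: w) = a :: w.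
  by rewrite iterM (eq_iter FcR) iterR IHw.
have cN : c %| N by apply: dvdn_fact; rewrite c0.
case/dvdnP: cN => r Nr.
have -> : N ^ l.+1 = (N ^ l * c) * r by rewrite expnS {1}Nr [r * c]mulnC mulnC mulnA.
exact: iter_period.
Qed.

End Aux.

Theorem mainTheorem9 (Q Sigma : finType) (A : expanding_automaton Q Sigma)
    (s : seq Sigma -> seq Sigma) (m n : nat) :
  in_S A s ->
  0 < m -> m < n ->
  iter m s =1 iter n s ->
  (forall i j, 0 < i -> i < j -> j < n -> ~ (iter i s =1 iter j s)) ->
  forall p : nat, prime p -> p %| n - m -> p %| #|Sigma|`!.
Proof.
move=> [qs [_ Hs]] m0 mn Hmn Hdist p pp /dvdnP [k' Hk].
case: (boolP (p %| #|Sigma|`!)) => // npN.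
exfalso.
have k0 : 0 < n - m by rewrite subn_gt0.
have k'0 : 0 < k' by move: k0; rewrite Hk muln_gt0 => /andP [].
have p1 := prime_gt1 pp.
apply: (Hdist m (m + k')) => //.
- by rewrite -{1}(addn0 m) ltn_add2l.
- rewrite -(subnK (ltnW mn)) addnC ltn_add2r Hk -{1}(mul1n k') mulnC ltn_mul2l.
  by rewrite k'0.
move=> w; rewrite addnC iterD.
set u := iter m s w.
have Hper : iter (n - m) s u = u by rewrite /u -iterD subnK ?Hmn // ltnW.
rewrite (eq_iter Hs) in Hper *.
have HN := @core _ _ A (size u) qs u (erefl _) (ex_intro2 _ _ (n - m) k0 Hper).
set P := _ ^ _ in HN.
case: (Bezoutl P k0) => a _ /dvdnP [c Hc].
have Hg : iter (gcdn (n - m) P) (word_map A qs) u = u.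
  by rewrite -{1}(iter_period _ _ _ _ a HN) -iterD (mulnC P a) Hc mulnC iter_period.
have gk : gcdn (n - m) P %| k'.
  have cop : coprime (gcdn (n - m) P) p.
    rewrite coprime_sym prime_coprime //; apply/negP => /dvdn_trans /(_ (dvdn_gcdr _ _)).
    by rewrite Euclid_dvdX // (negbTE npN).
  by rewrite -(Gauss_dvdr _ cop) mulnC -Hk dvdn_gcdl.
move: gk => /dvdnP [e ->]; rewrite mulnC.
rewrite (eq_iter Hs); symmetry; exact: iter_period _ _ _ _ e Hg.
Qed.
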